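(* Let $\gamma\subset\mathbb R^3$ be a closed curve satisfying a three-point condition with constant $\Delta\in[0,\infty)$. Then for any two points $q_1=(x_1,y_1,z_1)$, $q_2=(x_2,y_2,z_2)$ on $\gamma$, $$(z_1-z_2)^2\le\Delta^2\big[(x_1-x_2)^2+(y_1-y_2)^2\big].$$
   Context: The slope $S_P$ of a plane $P\subset\mathbb R^3$ is $\tan\Theta$, $\Theta\in[0,\pi/2]$ the dihedral angle between $P$ and the $xy$-plane ($+\infty$ if $P$ is vertical). For $\gamma:S^1\to\mathbb R^3$, $|P\cap\gamma|:=\#\{u\in S^1:\gamma(u)\in P\}$. $\gamma$ satisfies a three-point condition with constant $\Delta$ if $S_P\le\Delta$ for every plane $P$ with $|P\cap\gamma|\ge3$. *)

(* Defs.v *)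
From Stdlib Require Import Reals.
From Coquelicot Require Import Rbar.
Open Scope R_scope.

Definition point := (R * R * R)%type.
Definition px (p : point) : R := fst (fst p).
Definition py (p : point) : R := snd (fst p).
Definition pz (p : point) : R := snd p.

Definition in_plane (a b c d : R) (p : point) : Prop :=
  a * px p + b * py p + c * pz p = d.

(* Slope S_P = tan(Theta), Theta the dihedral angle between P and the
   xy-plane: tan Theta = sqrt(a^2+b^2)/|c|, and +oo if P is vertical (c = 0). *)
Definition plane_slope (a b c : R) : Rbar :=
  if Req_EM_T c 0 then p_infty else Finite (sqrt (a ^ 2 + b ^ 2) / Rabs c).

(* A closed curve gamma : S^1 -> R^3, with S^1 = R/Z: gamma is a continuous
   1-periodic map R -> R^3; the parameter u in S^1 corresponds to a unique
   representative in [0,1). *)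
Definition closed_curve (gamma : R -> point) : Prop :=
  (forall t, gamma (t + 1) = gamma t) /\
  (forall t, continuity_pt (fun s => px (gamma s)) t) /\
  (forall t, continuity_pt (fun s => py (gamma s)) t) /\
  (forall t, continuity_pt (fun s => pz (gamma s)) t).

(* |P ∩ gamma| >= 3 : at least three distinct parameters u in S^1 = [0,1)
   with gamma(u) in P. *)
Definition meets_at_least_3 (gamma : R -> point) (a b c d : R) : Prop :=
  exists u1 u2 u3 : R,
    0 <= u1 < 1 /\ 0 <= u2 < 1 /\ 0 <= u3 < 1 /\
    u1 <> u2 /\ u1 <> u3 /\ u2 <> u3 /\
    in_plane a b c d (gamma u1) /\ in_plane a b c d (gamma u2) /\
    in_plane a b c d (gamma u3).

Definition three_point_condition (gamma : R -> point) (Delta : R) : Prop :=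
  forall a b c d : R, (a <> 0 \/ b <> 0 \/ c <> 0) ->
    meets_at_least_3 gamma a b c d ->
    Rbar_le (plane_slope a b c) (Finite Delta).

(* Main.v *)
Require Import Defs.
From Stdlib Require Import Reals Lra Psatz ZArith.
From Coquelicot Require Import Rbar.
Open Scope R_scope.

Lemma slope_big (a b c dx dy dz Delta : R) :
  0 <= Delta -> (a <> 0 \/ b <> 0 \/ c <> 0) ->
  a * dx + b * dy + c * dz = 0 ->
  Delta ^ 2 * (dx ^ 2 + dy ^ 2) < dz ^ 2 ->
  ~ Rbar_le (plane_slope a b c) (Finite Delta).
Proof.
  intros HD Hn Hp Hlt. unfold plane_slope.
  destruct (Req_EM_T c 0) as [Hc|Hc]; [simpl; tauto|].
  intros Hle.
  assert (Hac : 0 < Rabs c) by (apply Rabs_pos_lt; auto).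
  assert (Hs : sqrt (a^2+b^2) <= Delta * Rabs c).
  { change (sqrt (a ^ 2 + b ^ 2) / Rabs c <= Delta) in Hle. apply (Rmult_le_compat_r (Rabs c)) in Hle; [|apply Rabs_pos].
    replace (sqrt (a ^ 2 + b ^ 2) / Rabs c * Rabs c) with (sqrt (a ^ 2 + b ^ 2)) in Hle by (field; intro; lra). lra. }
  assert (Hsq : a^2+b^2 <= (Delta * Rabs c)^2).
  { rewrite <- (sqrt_sqrt (a^2+b^2)) by nra.
    assert (0 <= sqrt (a^2+b^2)) by apply sqrt_pos. nra. }
  assert (Hc2 : Rabs c ^ 2 = c ^ 2) by (simpl; rewrite Rmult_1_r, Rmult_1_r; rewrite <- Rabs_mult; apply Rabs_right; nra).
  assert (Hcs : (a*dx+b*dy)^2 <= (a^2+b^2)*(dx^2+dy^2)) by (assert (0 <= (a*dy-b*dx)^2) by apply pow2_ge_0; nra).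
  assert (c^2*dz^2 <= Delta^2 * c^2 * (dx^2+dy^2)).
  { replace (c^2*dz^2) with ((a*dx+b*dy)^2) by (replace (a*dx+b*dy) with (-(c*dz)) by lra; ring).
    assert (0 <= dx^2+dy^2) by nra.
    replace (Delta^2*c^2) with ((Delta*Rabs c)^2) by (rewrite Rpow_mult_distr, Hc2; ring).
    nra. }
  assert (0 < c^2) by (simpl; rewrite Rmult_1_r; apply Rsqr_pos_lt; auto).
  nra.
Qed.

Lemma plane_exists (x1 y1 z1 x2 y2 z2 x3 y3 z3 : R) :
  z1 <> z2 ->
  exists a b c, (a <> 0 \/ b <> 0 \/ c <> 0) /\
    a * (x1-x2) + b * (y1-y2) + c * (z1-z2) = 0 /\
    a * (x3-x2) + b * (y3-y2) + c * (z3-z2) = 0.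
Proof.
  intros Hz.
  set (dx := x1-x2); set (dy := y1-y2); set (dz := z1-z2);
  set (ex := x3-x2); set (ey := y3-y2); set (ez := z3-z2).
  assert (dz <> 0) by (unfold dz; lra).
  set (a := dy*ez - dz*ey); set (b := dz*ex - dx*ez); set (c := dx*ey - dy*ex).
  destruct (Req_EM_T a 0) as [Ha|Ha];
  [destruct (Req_EM_T b 0) as [Hb|Hb];
   [destruct (Req_EM_T c 0) as [Hc|Hc]|]|].
  - destruct (Req_EM_T dx 0) as [Hx|Hx]; [destruct (Req_EM_T dy 0) as [Hy|Hy]|].
    + exists 1, 0, 0. split; [left; lra|]. split; [nra|].
      unfold b in Hb. rewrite Hx in Hb. assert (ex = 0) by nra. nra.
    + exists dy, (-dx), 0. split; [tauto|]. split; [ring|]. unfold c in Hc. nra.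
    + exists dy, (-dx), 0. split; [right; left; intro; apply Hx; lra|]. split; [ring|]. unfold c in Hc. nra.
  - exists a, b, c. split; [tauto|]. unfold a,b,c; split; ring.
  - exists a, b, c. split; [tauto|]. unfold a,b,c; split; ring.
  - exists a, b, c. split; [tauto|]. unfold a,b,c; split; ring.
Qed.

Lemma per_Z (gamma : R -> point) : (forall t, gamma (t + 1) = gamma t) ->
  forall (n : nat) t, gamma (t + INR n) = gamma t /\ gamma (t - INR n) = gamma t.
Proof.
  intros Hp n. induction n as [|n IH]; intros t.
  - simpl. replace (t+0) with t by ring. replace (t-0) with t by ring. auto.
  - rewrite S_INR. split.
    + replace (t + (INR n + 1)) with ((t + INR n) + 1) by ring. rewrite Hp. apply IH.
    + rewrite <- (Hp (t - (INR n + 1))). replace (t - (INR n + 1) + 1) with (t - INR n) by ring.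
      apply IH.
Qed.

Lemma rep (gamma : R -> point) : (forall t, gamma (t + 1) = gamma t) ->
  forall u, exists v, 0 <= v < 1 /\ gamma u = gamma v.
Proof.
  intros Hp u. destruct (base_Int_part u) as [H1 H2].
  exists (u - IZR (Int_part u)). split; [lra|].
  destruct (Z.le_ge_cases 0 (Int_part u)) as [Hz|Hz].
  - rewrite <- (Z2Nat.id _ Hz), <- INR_IZR_INZ. symmetry; apply per_Z; auto.
  - replace (Int_part u) with (- Z.of_nat (Z.to_nat (- Int_part u)))%Z by lia.
    rewrite opp_IZR, <- INR_IZR_INZ. replace (u - - _) with (u + INR (Z.to_nat (- Int_part u))) by ring.
    symmetry; apply per_Z; auto.
Qed.

Theorem mainTheorem10 (gamma : R -> point) (Delta : R) :
  0 <= Delta ->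
  closed_curve gamma ->
  three_point_condition gamma Delta ->
  forall u1 u2 : R,
    (pz (gamma u1) - pz (gamma u2)) ^ 2 <=
    Delta ^ 2 * ((px (gamma u1) - px (gamma u2)) ^ 2 +
                 (py (gamma u1) - py (gamma u2)) ^ 2).
Proof.
  intros HD [Hp _] H3 u1 u2.
  destruct (rep gamma Hp u1) as [v1 [Hv1 E1]].
  destruct (rep gamma Hp u2) as [v2 [Hv2 E2]].
  rewrite E1, E2.
  destruct (Rle_lt_dec ((pz (gamma v1) - pz (gamma v2)) ^ 2)
     (Delta ^ 2 * ((px (gamma v1) - px (gamma v2)) ^ 2 +
                 (py (gamma v1) - py (gamma v2)) ^ 2))) as [Hok|Hbad]; [exact Hok|].
  exfalso.
  assert (Hne : v1 <> v2).
  { intro He. rewrite He in Hbad. assert (0 <= Delta^2 * ((px (gamma v2) - px (gamma v2)) ^ 2 +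
                 (py (gamma v2) - py (gamma v2)) ^ 2)) by (apply Rmult_le_pos; [apply pow2_ge_0| apply Rplus_le_le_0_compat; apply pow2_ge_0]). nra. }
  assert (Hu3 : exists u3, 0 <= u3 < 1 /\ u3 <> v1 /\ u3 <> v2).
  { destruct (Req_EM_T v1 0); destruct (Req_EM_T v2 0).
    - congruence.
    - destruct (Req_EM_T v2 (1/2)).
      + exists (1/4). lra.
      + exists (1/2). lra.
    - destruct (Req_EM_T v1 (1/2)).
      + exists (1/4). lra.
      + exists (1/2). lra.
    - exists 0. lra. }
  destruct Hu3 as [u3 [Hu3 [N1 N2]]].
  assert (Hz : pz (gamma v1) <> pz (gamma v2)).
  { intro He. rewrite He in Hbad. assert (0 <= Delta^2 * ((px (gamma v1) - px (gamma v2)) ^ 2 +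
                 (py (gamma v1) - py (gamma v2)) ^ 2)) by (apply Rmult_le_pos; [apply pow2_ge_0| apply Rplus_le_le_0_compat; apply pow2_ge_0]).
    replace ((pz (gamma v2) - pz (gamma v2)) ^ 2) with 0 in Hbad by ring. lra. }
  destruct (plane_exists (px (gamma v1)) (py (gamma v1)) (pz (gamma v1))
     (px (gamma v2)) (py (gamma v2)) (pz (gamma v2))
     (px (gamma u3)) (py (gamma u3)) (pz (gamma u3)) Hz) as [a [b [c [Hn [P1 P3]]]]].
  apply (slope_big a b c _ _ _ Delta HD Hn P1 Hbad).
  apply (H3 a b c (a * px (gamma v2) + b * py (gamma v2) + c * pz (gamma v2)) Hn).
  exists v1, v2, u3. unfold in_plane.
  repeat split; auto; try lra.
Qed.
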